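(* Let $C_*^{\mathbb{Q}}$ be a chain complex of $\mathbb{Q}$-vector spaces, $C_*^{\mathbb{R}}=C_*^{\mathbb{Q}}\otimes_{\mathbb{Q}}\mathbb{R}$, and let $\|\cdot\|$ be a norm on $C_*^{\mathbb{R}}$. Let $a\in Z_n^{\mathbb{R}}$ be a real $n$-cycle whose homology class is rational, i.e. $[a]\in H_n(C_*^{\mathbb{Q}})\subseteq H_n(C_*^{\mathbb{R}})$. Then for every $\varepsilon>0$ there is a rational $n$-cycle $a'\in Z_n^{\mathbb{Q}}$ with $[a']=[a]$ in $H_n(C_*^{\mathbb{R}})$ and $\|a-a'\|\leq\varepsilon$.
   Context: $Z_n^{\mathbb{R}}$ and $Z_n^{\mathbb{Q}}$ denote the $n$-cycles of $C_*^{\mathbb{R}}$ and $C_*^{\mathbb{Q}}$; $H_n(C_*^{\mathbb{Q}})$ is viewed inside $H_n(C_*^{\mathbb{R}})\cong H_n(C_*^{\mathbb{Q}})\otimes_{\mathbb{Q}}\mathbb{R}$. *)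

(* Defs.v *)
From HB Require Import structures.
From mathcomp Require Import all_boot all_order all_algebra.
From mathcomp Require Import reals.
Set Implicit Arguments. Unset Strict Implicit. Unset Printing Implicit Defensive.
Import Order.TTheory GRing.Theory Num.Theory.
Local Open Scope ring_scope.

(* A Z-graded chain complex over the ring K: chain modules C i (i : int)
   and a family of linear maps d i j : C i -> C j which vanish unless
   j = i - 1 (so d (i) (i-1) is the boundary map d_i), with d o d = 0. *)
Definition chain_complex (K : pzRingType) (C : int -> lmodType K)
    (d : forall i j : int, {linear C i -> C j}) : Prop :=
  (forall i j : int, j + 1 != i -> forall x, d i j x = 0) /\
  (forall (i j k : int) x, d j k (d i j x) = 0).

Definition is_cycle (K : pzRingType) (C : int -> lmodType K)
    (d : forall i j : int, {linear C i -> C j}) (n : int) (x : C n) : Prop :=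
  d n (n - 1) x = 0.

Definition is_boundary (K : pzRingType) (C : int -> lmodType K)
    (d : forall i j : int, {linear C i -> C j}) (n : int) (x : C n) : Prop :=
  exists b : C (n + 1), d (n + 1) n b = x.

(* [iota : VQ -> VR] exhibits VR as VQ (x)_Q R: iota is Q-linear, its image
   spans VR over R, and Q-linearly independent families are sent to
   R-linearly independent families (i.e. the induced map VQ (x)_Q R -> VR
   is surjective and injective). *)
Definition scalar_extension (R : realType) (VQ : lmodType rat) (VR : lmodType R)
    (iota : VQ -> VR) : Prop :=
  [/\ (forall x y, iota (x + y) = iota x + iota y),
      (forall (q : rat) x, iota (q *: x) = ratr q *: iota x),
      (forall x : VR, exists (k : nat) (r : 'I_k -> R) (v : 'I_k -> VQ),
          x = \sum_(i < k) r i *: iota (v i))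
    & (forall (k : nat) (r : 'I_k -> R) (v : 'I_k -> VQ),
         (forall c : 'I_k -> rat, \sum_(i < k) c i *: v i = 0 -> forall i, c i = 0) ->
         \sum_(i < k) r i *: iota (v i) = 0 -> forall i, r i = 0)].

Definition is_norm (R : realType) (V : lmodType R) (N : V -> R) : Prop :=
  [/\ (forall x y, N (x + y) <= N x + N y),
      (forall (r : R) x, N (r *: x) = `|r| * N x)
    & (forall x, N x = 0 -> x = 0)].

(* Main.v *)
Require Import Defs.
From HB Require Import structures.
From mathcomp Require Import all_boot all_order all_algebra.
From mathcomp Require Import reals.
From mathcomp Require Import lra.
Import Order.TTheory GRing.Theory Num.Theory.
Local Open Scope ring_scope.


Lemma approx_rat (R : realType) (r d : R) : 0 < d ->
  exists q : rat, `|r - ratr q| <= d.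
Proof.
move=> d0; have hlt : r - d < r by rewrite ltrBlDr ltrDl.
have [q] := @rat_in_itvoo R (r - d) r hlt.
rewrite in_itv /= => /andP[h1 h2]; exists q.
rewrite ger0_norm ?subr_ge0 ?ltW //.
by rewrite ltrBlDr -ltrBlDl.
Qed.

Lemma N_sum (R : realType) (V : lmodType R) (N : V -> R) (k : nat)
  (f : 'I_k -> V) : is_norm N -> N (\sum_(i < k) f i) <= \sum_(i < k) N (f i).
Proof.
case=> tri hom _.
have N0 : N 0 = 0 by rewrite -(scale0r (0:V)) hom normr0 mul0r.
elim/big_ind2: _ => //.
- by rewrite N0.
- move=> x1 x2 y1 y2 h1 h2; apply: le_trans (tri _ _) _; exact: lerD.
Qed.

Lemma iota_sum (R : realType) (VQ : lmodType rat) (VR : lmodType R)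
  (iota : VQ -> VR) (k : nat) (q : 'I_k -> rat) (v : 'I_k -> VQ) :
  scalar_extension iota ->
  iota (\sum_(i < k) q i *: v i) = \sum_(i < k) ratr (q i) *: iota (v i).
Proof.
case=> hadd hsc _ _.
have i0 : iota 0 = 0.
  by apply: (addrI (iota 0)); rewrite -hadd !addr0.
elim/big_rec2: _ => // i y1 y2 _ <-.
by rewrite hadd hsc.
Qed.

Theorem lemma2p14 (R : realType)
    (CQ : int -> lmodType rat) (dQ : forall i j : int, {linear CQ i -> CQ j})
    (CR : int -> lmodType R) (dR : forall i j : int, {linear CR i -> CR j})
    (iota : forall i : int, CQ i -> CR i)
    (N : forall i : int, CR i -> R)
    (hQ : chain_complex dQ)
    (hR : chain_complex dR)
    (hiota : forall i : int, scalar_extension (iota i))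
    (hchain : forall (i j : int) (x : CQ i), iota j (dQ i j x) = dR i j (iota i x))
    (hN : forall i : int, is_norm (N i))
    (n : int) (a : CR n)
    (ha : is_cycle dR a)
    (hrat : exists z : CQ n, is_cycle dQ z /\ is_boundary dR (a - iota n z))
    (eps : R) (heps : 0 < eps) :
  exists a' : CQ n,
    [/\ is_cycle dQ a', is_boundary dR (a - iota n a') & N n (a - iota n a') <= eps].
Proof.
case: hrat => z [hz [b hb]].
have hi := hiota (n + 1).
case: (hi) => _ _ /(_ b) [k [r [v hbv]]] _.
pose w i := dR (n + 1) n (iota (n + 1) (v i)).
have hq : forall i : 'I_k, exists q : rat,
    `|r i - ratr q| * (N n (w i) + 1) <= eps / k.+1%:R.
  move=> i.
  have hNp : 0 < N n (w i) + 1.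
    case: (hN n) => tri hom _.
    have : 0 <= N n (w i).
      have := tri (w i) (- w i); rewrite subrr.
      have -> : N n (- w i) = N n (w i) by rewrite -scaleN1r hom normrN normr1 mul1r.
      have N0 : N n 0 = 0 by rewrite -(scale0r (0 : CR n)) hom normr0 mul0r.
      rewrite N0 => h; lra.
    by move=> h; apply: (le_lt_trans h); rewrite ltrDl.
  have [q hq] := @approx_rat R (r i) (eps / k.+1%:R / (N n (w i) + 1))
    (divr_gt0 (divr_gt0 heps (ltr0Sn _ _)) hNp).
  exists q; by rewrite -ler_pdivlMr.
have [q hqP] := fin_all_exists hq.
pose s := \sum_(i < k) q i *: v i.
exists (z + dQ (n + 1) n s).
have key : a - iota n (z + dQ (n + 1) n s)
    = dR (n + 1) n (b - iota (n + 1) s).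
  rewrite linearB /= hb -hchain.
  case: (hiota n) => hadd _ _ _.
  by rewrite hadd opprD addrA.
split.
- rewrite /is_cycle linearD /= hz add0r; exact: hQ.2.
- by exists (b - iota (n + 1) s).
rewrite key /s iota_sum // hbv -sumrB.
under eq_bigr do rewrite -scalerBl.
rewrite linear_sum /=.
under eq_bigr do rewrite linearZ /=.
apply: le_trans (@N_sum _ _ _ _ _ (hN n)) _.
case: (hN n) => _ hom _.
apply: (@le_trans _ _ (\sum_(i < k) eps / k.+1%:R)).
  apply: ler_sum => i _; rewrite hom.
  apply: le_trans (hqP i).
  apply: ler_wpM2l; first exact: normr_ge0.
  by rewrite lerDl.
by rewrite sumr_const card_ord -[_ *+ k]mulr_natr mulrAC ler_pdivrMr ?ltr0Sn // ler_wpM2l ?ltW // ltr_nat ltnSn.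
Qed.
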